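(* Let $\mathbb{T}$ be a time scale, let $a<b$ be points of $\mathbb{T}$, and let $\alpha,\beta$ be real constants. Suppose the characteristic equation $\lambda^2+\alpha\lambda+\beta=0$ has two distinct positive roots. Then the equation $$x^{\Delta\Delta}(t)+\alpha x^{\Delta}(t)+\beta x(t)=0,\quad t\in[a,b]_{\mathbb{T}},$$ has Hyers–Ulam stability on $[a,b]_{\mathbb{T}}$; that is, for every $\varepsilon>0$, whenever $y\in C^2_{rd}([a,b]_{\mathbb{T}})$ satisfies $|y^{\Delta\Delta}(t)+\alpha y^{\Delta}(t)+\beta y(t)|\le\varepsilon$ for all $t\in[a,b]_{\mathbb{T}}$, there exists a solution $u\in C^2_{rd}([a,b]_{\mathbb{T}})$ of $u^{\Delta\Delta}+\alpha u^{\Delta}+\beta u=0$ on $[a,b]_{\mathbb{T}}$ such that $|y(t)-u(t)|\le K\varepsilon$ for all $t\in[a,b]_{\mathbb{T}}$, for some constant $K>0$.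
   Context: A time scale $\mathbb{T}$ is a nonempty closed subset of $\mathbb{R}$; $[a,b]_{\mathbb{T}}:=[a,b]\cap\mathbb{T}$. $\sigma(t)=\inf\{s\in\mathbb{T}:s>t\}$ is the forward jump operator, $\mu(t)=\sigma(t)-t$ the graininess, and $f^{\Delta}$ denotes the delta (Hilger) derivative; $f^{\Delta\Delta}=(f^\Delta)^\Delta$. $C^2_{rd}([a,b]_{\mathbb{T}})$ denotes the functions that are twice delta differentiable on $[a,b]_{\mathbb{T}}$ with rd-continuous second delta derivative. *)

(* Defs.v *)
From HB Require Import structures.
From mathcomp Require Import all_boot all_order all_algebra.
From mathcomp Require Import all_classical all_reals all_analysis.
Set Implicit Arguments. Unset Strict Implicit. Unset Printing Implicit Defensive.
Import Order.TTheory GRing.Theory Num.Theory.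
Import numFieldNormedType.Exports.
Local Open Scope classical_set_scope.
Local Open Scope ring_scope.

Section TimeScales.
Variable R : realType.

Definition time_scale (T : set R) : Prop := T !=set0 /\ closed T.

Definition tsitv (T : set R) (a b : R) : set R := [set t | T t /\ a <= t <= b].

Definition fjump (X : set R) (t : R) : R :=
  if pselect (exists s, X s /\ t < s) then inf [set s | X s /\ t < s] else t.

Definition bjump (X : set R) (t : R) : R :=
  if pselect (exists s, X s /\ s < t) then sup [set s | X s /\ s < t] else t.

(* X^kappa : X with its left-scattered maximum (if any) removed *)
Definition kappa (X : set R) : set R :=
  [set t | X t /\ ~ ((forall s, X s -> s <= t) /\ bjump X t < t)].

Definition is_dderiv (X : set R) (f : R -> R) (t c : R) : Prop :=
  forall eps : R, 0 < eps -> exists delta : R, 0 < delta /\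
    forall s, X s -> `|s - t| < delta ->
      `|f (fjump X t) - f s - c * (fjump X t - s)| <= eps * `|fjump X t - s|.

(* rd-continuity on the time scale X: continuous at right-dense points,
   finite left-sided limits at left-dense points *)
Definition rd_cont (X : set R) (f : R -> R) : Prop :=
  (forall t, X t -> fjump X t = t ->
     forall eps : R, 0 < eps -> exists delta : R, 0 < delta /\
       forall s, X s -> `|s - t| < delta -> `|f s - f t| < eps) /\
  (forall t, X t -> bjump X t = t ->
     (exists s, X s /\ s < t) ->
     exists L : R, forall eps : R, 0 < eps -> exists delta : R, 0 < delta /\
       forall s, X s -> t - delta < s -> s < t -> `|f s - L| < eps).

(* y in C^2_rd(X): y1 = y^Delta on X^kappa, y2 = y^{Delta Delta} on X^{kappa^2},
   and y2 is rd-continuous on X^{kappa^2} *)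
Definition C2rd (X : set R) (y y1 y2 : R -> R) : Prop :=
  (forall t, kappa X t -> is_dderiv X y t (y1 t)) /\
  (forall t, kappa (kappa X) t -> is_dderiv (kappa X) y1 t (y2 t)) /\
  rd_cont (kappa (kappa X)) y2.

End TimeScales.

(* Main.v *)
Require Import Defs.
From HB Require Import structures.
From mathcomp Require Import all_boot all_order all_algebra.
From mathcomp Require Import all_classical all_reals all_analysis.
From mathcomp Require Import ring lra.
Import Order.TTheory GRing.Theory Num.Theory.
Import numFieldNormedType.Exports.
Set Implicit Arguments. Unset Strict Implicit. Unset Printing Implicit Defensive.
Local Open Scope classical_set_scope.
Local Open Scope ring_scope.

Section H.
Variable R : realType.
Implicit Types (Y X : set R) (p f g : R -> R).

Lemma closed_approx Y x : closed Y ->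
  (forall e : R, 0 < e -> exists y, Y y /\ `|x - y| < e) -> Y x.
Proof.
move=> cY H; apply: cY => B /nbhs_ballP [e /= e0 sB].
have [y [Yy hy]] := H e e0.
by exists y; split => //; apply: sB.
Qed.

Lemma fjump_none Y t : ~ (exists s, Y s /\ t < s) -> fjump Y t = t.
Proof. by move=> h; rewrite /fjump; case: pselect. Qed.

Lemma fjump_facts Y t : (exists s, Y s /\ t < s) ->
  [/\ t <= fjump Y t, (forall s, Y s -> t < s -> fjump Y t <= s) &
      (forall e : R, 0 < e -> exists s, Y s /\ t < s /\ s < fjump Y t + e)].
Proof.
move=> ex; have -> : fjump Y t = inf [set s | Y s /\ t < s].
  by rewrite /fjump; case: pselect.
have ne : [set s | Y s /\ t < s] !=set0 by case: ex => s hs; exists s.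
have hl : has_lbound [set s | Y s /\ t < s].
  by exists t => s [_ /ltW].
split.
- by apply: lb_le_inf => // s [_ /ltW].
- by move=> s Ys ts; exact: (ge_inf hl (conj Ys ts)).
- move=> e e0; have [s [Ys ts] hs] := inf_adherent e0 (conj ne hl).
  by exists s.
Qed.

Lemma fjump_in Y t : closed Y -> (exists s, Y s /\ t < s) -> Y (fjump Y t).
Proof.
move=> cY ex; have [h1 h2 h3] := fjump_facts ex.
apply: closed_approx => // e e0.
have [s [Ys [ts se]]] := h3 e e0.
exists s; split => //.
have := h2 s Ys ts => hh.
rewrite ler0_norm; [lra|]; rewrite subr_le0 //.
Qed.

Lemma bjump_lt Y t : bjump Y t < t -> forall s, Y s -> s < t -> s <= bjump Y t.
Proof.
move=> bt s Ys st.
have ex : exists s, Y s /\ s < t by exists s.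
have E : bjump Y t = sup [set s | Y s /\ s < t].
  by rewrite /bjump; case: pselect.
have hu : has_sup [set s | Y s /\ s < t].
  split; first by exists s.
  by exists t => x [_ /ltW].
by rewrite E; apply: sup_upper_bound.
Qed.

Lemma small0 (x k : R) : 0 <= k -> (forall e : R, 0 < e -> `|x| <= e * k) -> x = 0.
Proof.
move=> k0 H; apply/eqP; apply/negPn/negP => x0.
have ax : 0 < `|x| by rewrite normr_gt0.
have := H (`|x| / (k + 1)) (divr_gt0 ax (ltr_pwDr ltr01 k0)).
rewrite mulrAC ler_pdivlMr ?(ltr_pwDr ltr01 k0) //.
nra.
Qed.

Lemma dd_jump Y p t c : Y t -> is_dderiv Y p t c ->
  p (fjump Y t) = p t + c * (fjump Y t - t).
Proof.
move=> Yt H.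
suff : p (fjump Y t) - p t - c * (fjump Y t - t) = 0 by lra.
apply: (small0 (k := `|fjump Y t - t|)) => // e e0.
have [d [d0 hd]] := H e e0.
by apply: hd; rewrite // subrr normr0.
Qed.

Definition contw Y f t := forall e : R, 0 < e -> exists d : R, 0 < d /\
  forall s, Y s -> `|s - t| < d -> `|f s - f t| < e.

Lemma dd_cont Y p t c : Y t -> is_dderiv Y p t c -> contw Y p t.
Proof.
move=> Yt H e e0.
move: H; rewrite /is_dderiv; move: (fjump Y t) => sig H.
have mu0 : 0 <= `|sig - t| by [].
have e1p : 0 < e / (4 * (`|sig - t| + 1)) by apply: divr_gt0 => //; lra.
have [d1 [d10 hd]] := H _ e1p.
have cp : 0 < 8 * (`|c| + 1) by have := normr_ge0 c; lra.
exists (Num.min d1 (Num.min 1 (e / (8 * (`|c| + 1))))).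
split; first by rewrite !lt_min d10 ltr01 /= divr_gt0 //.
move=> s Ys; rewrite !lt_min => /and3P [sd1 s1 sc].
have h1 := hd s Ys sd1.
have h2 := hd t Yt (ltac:(by rewrite subrr normr0)).
have E : p s - p t = (p sig - p t - c * (sig - t)) - (p sig - p s - c * (sig - s)) + c * (s - t).
  by ring.
rewrite E.
move: (p sig - p t - c * (sig - t)) h2 => A h2.
move: (p sig - p s - c * (sig - s)) h1 => B h1.
have tri : `|sig - s| <= `|sig - t| + `|s - t|.
  have -> : sig - s = (sig - t) + (t - s) by ring.
  by rewrite (distrC s t); exact: ler_normD.
idtac.
set mu := `|sig - t| in mu0 e1p h2 h1 tri *.
have hB : `|B| <= e / (4 * (mu + 1)) * (2 * mu + 1).
  apply: (le_trans h1); apply: ler_wpM2l; first exact: ltW.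
  have := normr_ge0 (s - t); lra.
have hc : `|c * (s - t)| <= e / 8.
  rewrite normrM.
  have h : `|c| * `|s - t| <= `|c| * (e / (8 * (`|c| + 1))).
    by apply: ler_wpM2l => //; apply: ltW.
  apply: (le_trans h).
  rewrite mulrA ler_pdivrMr //.
  have := normr_ge0 c; nra.
have hA' : `|A| <= e / 4.
  apply: (le_trans h2).
  rewrite mulrAC ler_pdivrMr; last by lra.
  nra.
have hB' : `|B| <= e / 2.
  apply: (le_trans hB).
  rewrite mulrAC ler_pdivrMr; last by lra.
  nra.
have := ler_normD (A - B) (c * (s - t)).
have := ler_normB A B.
lra.
Qed.
Lemma dd_lin Y f g t c d (k1 k2 k3 : R) : is_dderiv Y f t c -> is_dderiv Y g t d ->
  is_dderiv Y (fun x => k1 * f x + k2 * g x + k3) t (k1 * c + k2 * d).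
Proof.
move=> Hf Hg e e0.
have K0 : 0 < `|k1| + `|k2| + 1 by have := normr_ge0 k1; have := normr_ge0 k2; lra.
have e1 : 0 < e / (`|k1| + `|k2| + 1) by apply: divr_gt0.
have [d1 [d10 h1]] := Hf _ e1.
have [d2 [d20 h2]] := Hg _ e1.
exists (Num.min d1 d2); split; first by rewrite lt_min d10.
move=> s Ys; rewrite lt_min => /andP [s1 s2].
have {}h1 := h1 s Ys s1; have {}h2 := h2 s Ys s2.
move: (fjump Y t) h1 h2 => sig h1 h2.
have -> : k1 * f sig + k2 * g sig + k3 - (k1 * f s + k2 * g s + k3) -
    (k1 * c + k2 * d) * (sig - s) =
    k1 * (f sig - f s - c * (sig - s)) + k2 * (g sig - g s - d * (sig - s)) by ring.
move: (f sig - f s - c * (sig - s)) h1 => A h1.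
move: (g sig - g s - d * (sig - s)) h2 => B h2.
have Ee : e / (`|k1| + `|k2| + 1) * (`|k1| + `|k2| + 1) = e by rewrite mulfVK //; lra.
move: (e / (`|k1| + `|k2| + 1)) e1 h1 h2 Ee => e' e1 h1 h2 Ee.
apply: (le_trans (ler_normD _ _)); rewrite !normrM.
have := ler_wpM2l (normr_ge0 k1) h1.
have := ler_wpM2l (normr_ge0 k2) h2.
have := normr_ge0 (sig - s).
move: (`|sig - s|) => z.
have := normr_ge0 k1; have := normr_ge0 k2.
nra.
Qed.

Lemma contw_lin Y f g t (k1 k2 k3 : R) : contw Y f t -> contw Y g t ->
  contw Y (fun x => k1 * f x + k2 * g x + k3) t.
Proof.
move=> Hf Hg e e0.
have K0 : 0 < `|k1| + `|k2| + 1 by have := normr_ge0 k1; have := normr_ge0 k2; lra.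
have e1 : 0 < e / (`|k1| + `|k2| + 1) by apply: divr_gt0.
have [d1 [d10 h1]] := Hf _ e1.
have [d2 [d20 h2]] := Hg _ e1.
exists (Num.min d1 d2); split; first by rewrite lt_min d10.
move=> s Ys; rewrite lt_min => /andP [s1 s2].
have {}h1 := h1 s Ys s1; have {}h2 := h2 s Ys s2.
have -> : k1 * f s + k2 * g s + k3 - (k1 * f t + k2 * g t + k3) =
    k1 * (f s - f t) + k2 * (g s - g t) by ring.
move: (f s - f t) h1 => A h1.
move: (g s - g t) h2 => B h2.
have Ee : e / (`|k1| + `|k2| + 1) * (`|k1| + `|k2| + 1) = e by rewrite mulfVK //; lra.
move: (e / (`|k1| + `|k2| + 1)) e1 h1 h2 Ee => e' e1 h1 h2 Ee.
apply: (le_lt_trans (ler_normD _ _)); rewrite !normrM.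
have := ler_wpM2l (normr_ge0 k1) (ltW h1).
have := ler_wpM2l (normr_ge0 k2) (ltW h2).
have := normr_ge0 k1; have := normr_ge0 k2.
nra.
Qed.

Lemma dd_sub Y X f t c : Y `<=` X -> fjump Y t = fjump X t ->
  is_dderiv X f t c -> is_dderiv Y f t c.
Proof.
move=> sYX E H e e0; have [d [d0 hd]] := H e e0.
by exists d; split => // s Ys; rewrite E; apply: hd; apply: sYX.
Qed.

Lemma contw_sub Y X f t : Y `<=` X -> contw X f t -> contw Y f t.
Proof.
move=> sYX H e e0; have [d [d0 hd]] := H e e0.
by exists d; split => // s Ys; apply: hd; apply: sYX.
Qed.

Lemma rd_cont_of Y X f : Y `<=` X -> (forall t, X t -> contw X f t) -> rd_cont Y f.
Proof.
move=> sYX H; split.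
- move=> t Yt _ e e0; have [d [d0 hd]] := H t (sYX _ Yt) e e0.
  by exists d; split => // s Ys; apply: hd; apply: sYX.
- move=> t Yt _ _; exists (f t) => e e0.
  have [d [d0 hd]] := H t (sYX _ Yt) e e0.
  exists d; split => // s Ys h1 h2; apply: hd; first exact: sYX.
  rewrite ltr0_norm; lra.
Qed.
Lemma CL Y (m l dl : R) p : closed Y -> Y m -> (forall s, Y s -> s <= m) ->
  0 <= l -> 0 < dl ->
  (forall t, Y t -> t < m -> exists c, is_dderiv Y p t c /\ c <= l * p t - dl) ->
  (kappa Y m -> contw Y p m) -> 0 < p m -> forall t, Y t -> 0 < p t.
Proof.
move=> cY Ym mmax l0 dl0 Hd Hc pm t0 Yt0.
rewrite ltNge; apply/negP => pt0.
pose S := [set t | Y t /\ p t <= 0].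
have neS : S !=set0 by exists t0.
have ubS : ubound S m by move=> x [Yx _]; exact: mmax.
have hS : has_sup S by split => //; exists m.
pose s := sup S.
have sm : s <= m by exact: ge_sup.
have Sles : forall x, S x -> x <= s by move=> x Sx; exact: sup_upper_bound.
have Ys : Y s.
  apply: closed_approx => // e e0.
  have [x Sx hx] := sup_adherent e0 hS.
  exists x; split; first by case: Sx.
  have := Sles x Sx; rewrite -/s in hx => xs.
  rewrite ger0_norm; [lra|]; rewrite subr_ge0 //.
have ps : p s <= 0.
  rewrite leNgt; apply/negP => ps0.
  have cs : contw Y p s.
    have [sm'|ms] := ltP s m.
      have [c [dd _]] := Hd s Ys sm'.
      exact: dd_cont dd.
    have em : s = m by apply/eqP; rewrite eq_le sm ms.
    rewrite em; apply: Hc.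
    case: (pselect (kappa Y m)) => // nk; exfalso.
    have bm : bjump Y m < m.
      apply: contra_notT nk; rewrite -leNgt => bm.
      split => // -[_ bl]; lra.
    have : s <= bjump Y m.
      apply: ge_sup => // x [Yx px].
      apply: bjump_lt => //.
      rewrite lt_neqAle mmax // andbT; apply/eqP => xm.
      by move: px; rewrite xm; lra.
    lra.
  have [d [d0 hd]] := cs (p s) ps0.
  have [x Sx hx] := sup_adherent d0 hS.
  rewrite -/s in hx.
  case: Sx => Yx px.
  have := Sles x (conj Yx px) => xs.
  have := hd x Yx; rewrite ler0_norm; last by rewrite subr_le0.
  move=> /(_ ltac:(lra)).
  rewrite ltr_norml; lra.
have slm : s < m by rewrite lt_neqAle sm andbT; apply/eqP => sm'; move: ps; rewrite sm'; lra.
have [c [dd hc]] := Hd s Ys slm.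
have ex : exists y, Y y /\ s < y by exists m.
have [h1 h2 h3] := fjump_facts ex.
have dj := dd_jump Ys dd.
have [hsig|hsig] := ltP s (fjump Y s).
- have Ysig := fjump_in cY ex.
  have psig : p (fjump Y s) <= 0.
    rewrite dj.
    have : c * (fjump Y s - s) <= (l * p s - dl) * (fjump Y s - s).
      by apply: ler_wpM2r => //; rewrite subr_ge0 ltW.
    have : l * p s <= 0 by nra.
    nra.
  have := Sles _ (conj Ysig psig); lra.
- have es : fjump Y s = s by apply/eqP; rewrite eq_le hsig h1.
  have dl2 : 0 < dl / 2 by lra.
  have [d [d0 hd]] := dd _ dl2.
  have md : 0 < Num.min d (m - s) by rewrite lt_min d0 subr_gt0.
  have [y [Yy [sy yl]]] := h3 _ md.
  rewrite es in yl.
  have mdd : Num.min d (m - s) <= d by rewrite ge_min lexx.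
  have yd : y - s < d by lra.
  have py : 0 < p y.
    rewrite ltNge; apply/negP => py.
    have := Sles y (conj Yy py); lra.
  have := hd y Yy; rewrite ger0_norm; last by rewrite subr_ge0 ltW.
  move=> /(_ yd) h; rewrite es in h.
  have ys0 : 0 <= y - s by lra.
  rewrite (distrC s y) (ger0_norm ys0) in h.
  have lps : l * p s <= 0 by nra.
  rewrite ler_norml in h.
  case/andP: h => h _.
  nra.
Qed.
Lemma prod3 (u v w : R) : 0 <= u -> 0 <= v -> 0 <= w ->
  1 + (u + v + w) <= (1 + u) * (1 + v) * (1 + w).
Proof.
move=> u0 v0 w0.
have h1 := mulr_ge0 u0 v0; have h2 := mulr_ge0 u0 w0; have h3 := mulr_ge0 v0 w0.
have h4 := mulr_ge0 h1 w0.
have -> : (1 + u) * (1 + v) * (1 + w) = 1 + (u + v + w) + (u * v + u * w + v * w + u * v * w) by ring.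
lra.
Qed.

Section Exp.
Variables (X : set R) (a lam : R).
Hypothesis Xa : X a.
Hypothesis Xge : forall x, X x -> a <= x.
Hypothesis lam0 : 0 < lam.

Lemma lamD u v : u <= v -> 0 <= lam * (v - u).
Proof. by move=> uv; apply: mulr_ge0; [exact: ltW | rewrite subr_ge0]. Qed.

Definition super (g : R -> R) := 1 <= g a /\
  forall y x, X y -> X x -> y <= x -> g y * (1 + lam * (x - y)) <= g x.

Definition Eexp x := inf [set v | exists g, super g /\ v = g x].

Lemma super_ex : super (fun x => expR (lam * (x - a))).
Proof.
split; first by rewrite subrr mulr0 expR0.
move=> y x Xy Xx yx.
have -> : lam * (x - a) = lam * (y - a) + lam * (x - y) by ring.
rewrite expRD; apply: ler_wpM2l; first exact: expR_ge0.
exact: expR_ge1Dx.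
Qed.

Lemma super_ge1 g x : super g -> X x -> 1 <= g x.
Proof.
move=> [g1 gs] Xx.
have := gs a x Xa Xx (Xge Xx).
have : 0 <= lam * (x - a) by apply: mulr_ge0; [exact: ltW | rewrite subr_ge0; exact: Xge].
nra.
Qed.

Lemma E_hasinf x : X x -> has_inf [set v | exists g, super g /\ v = g x].
Proof.
move=> Xx; split; first by exists (expR (lam * (x - a))); exists (fun x => expR (lam * (x - a))); split => //; exact: super_ex.
by exists 1 => v [g [sg ->]]; exact: super_ge1.
Qed.

Lemma E_le g x : X x -> super g -> Eexp x <= g x.
Proof. by move=> Xx sg; apply: (ge_inf (E_hasinf Xx).2); exists g. Qed.

Lemma E_ge1 x : X x -> 1 <= Eexp x.
Proof.
move=> Xx; apply: lb_le_inf; first exact: (E_hasinf Xx).1.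
by move=> v [g [sg ->]]; exact: super_ge1.
Qed.

Lemma E_super : super Eexp.
Proof.
split; first exact: E_ge1.
move=> y x Xy Xx yx.
apply: lb_le_inf; first exact: (E_hasinf Xx).1.
move=> v [g [sg ->]].
have := E_le Xy sg.
have := sg.2 y x Xy Xx yx.
have : 0 <= lam * (x - y) by apply: mulr_ge0; [exact: ltW | rewrite subr_ge0].
nra.
Qed.

Lemma E_up y x : X y -> X x -> y < x -> lam * (x - y) < 1 ->
  Eexp x <= Eexp y / (1 - lam * (x - y)).
Proof.
move=> Xy Xx yx hl.
pose phi z := Eexp y / (1 - lam * (z - y)).
pose g z := if z <= y then Eexp z else if lam * (z - y) < 1 then Num.min (Eexp z) (phi z) else Eexp z.
have gE z : g z <= Eexp z.
  rewrite /g; case: ifP => // _; case: ifP => // _; by rewrite ge_min lexx.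
have Ey1 := E_ge1 Xy.
have g0 z : X z -> 0 <= g z.
  move=> Xz; rewrite /g; case: ifP => _; first by have := E_ge1 Xz; lra.
  case: ifP => h; last by have := E_ge1 Xz; lra.
  rewrite le_min; apply/andP; split; first by have := E_ge1 Xz; lra.
  rewrite /phi; apply: divr_ge0; lra.
have sg : super g.
  split; first by rewrite /g (Xge Xy); exact: E_ge1.
  move=> y' x' Xy' Xx' yx'.
  have fac0 : 0 <= 1 + lam * (x' - y') by have := lamD yx'; lra.
  have toE : g y' * (1 + lam * (x' - y')) <= Eexp x'.
    apply: le_trans (E_super.2 y' x' Xy' Xx' yx').
    by apply: ler_wpM2r => //.
  rewrite {2}/g; case: ifP => hx'.
    rewrite /g (le_trans yx' hx'); exact: E_super.2.
  case: ifP => hl'; last exact: toE.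
  rewrite le_min toE /=.
  move/negbT: hx'; rewrite -ltNge => hx'.
  rewrite /phi.
  have den : 0 < 1 - lam * (x' - y) by lra.
  rewrite ler_pdivlMr //.
  rewrite /g; case: ifP => hy'.
    have s1 := E_super.2 y' y Xy' Xy hy'.
    have a1 : 0 <= lam * (y - y') by apply: mulr_ge0; [exact: ltW | rewrite subr_ge0].
    have a2 : 0 <= lam * (x' - y) by apply: mulr_ge0; [exact: ltW | rewrite subr_ge0 ltW].
    have Ey' := E_ge1 Xy'.
    have k : (1 + lam * (x' - y')) * (1 - lam * (x' - y)) <= (1 + lam * (y - y')).
      have -> : x' - y' = (x' - y) + (y - y') by ring.
      have -> : lam * (x' - y + (y - y')) = lam * (x' - y) + lam * (y - y') by ring.
      nra.
    nra.
  move/negbT: hy'; rewrite -ltNge => hy'.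
  have hl2 : lam * (y' - y) < 1.
    have : lam * (y' - y) <= lam * (x' - y) by apply: ler_wpM2l; [exact: ltW | lra].
    lra.
  rewrite hl2.
  have gm : Num.min (Eexp y') (phi y') <= phi y' by rewrite ge_min lexx orbT.
  have den2 : 0 < 1 - lam * (y' - y) by lra.
  have ph : phi y' * (1 - lam * (y' - y)) = Eexp y by rewrite /phi mulfVK //; lra.
  have k : (1 + lam * (x' - y')) * (1 - lam * (x' - y)) <= (1 - lam * (y' - y)).
    have -> : lam * (x' - y') = lam * (x' - y) - lam * (y' - y) by ring.
    have : 0 <= lam * (x' - y) by apply: mulr_ge0; [exact: ltW | lra].
    have : 0 <= lam * (y' - y) by apply: mulr_ge0; [exact: ltW | lra].
    have : lam * (y' - y) <= lam * (x' - y) by apply: ler_wpM2l; [exact: ltW | lra].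
    nra.
  have m0 : 0 <= Num.min (Eexp y') (phi y').
    have := g0 y' Xy'; rewrite /g.
    have -> : (y' <= y) = false by apply/negbTE; rewrite -ltNge.
    by rewrite hl2.
  have p0 : 0 <= phi y' by apply: le_trans m0 gm.
  have : Num.min (Eexp y') (phi y') * ((1 + lam * (x' - y')) * (1 - lam * (x' - y))) <= phi y' * (1 - lam * (y' - y)).
    apply: le_trans (_ : phi y' * ((1 + lam * (x' - y')) * (1 - lam * (x' - y))) <= _).
      apply: ler_wpM2r => //; nra.
    by apply: ler_wpM2l.
  rewrite ph; nra.
apply: (le_trans (E_le Xx sg)).
rewrite /g; have -> : (x <= y) = false by apply/negbTE; rewrite -ltNge.
by rewrite hl ge_min lexx orbT.
Qed.
Lemma E_jump t sg : X t -> X sg -> t < sg -> (forall x, X x -> t < x -> sg <= x) ->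
  Eexp sg = Eexp t * (1 + lam * (sg - t)).
Proof.
move=> Xt Xs ts hsg.
have ge := E_super.2 t sg Xt Xs (ltW ts).
apply/eqP; rewrite eq_le ge andbT.
have Es1 := E_ge1 Xs; have Et1 := E_ge1 Xt.
pose c := Eexp t * (1 + lam * (sg - t)) / Eexp sg.
have c0 : 0 <= c by rewrite /c; apply: divr_ge0 => //; have := lamD (ltW ts); nra.
have c1 : c <= 1 by rewrite /c ler_pdivrMr; lra.
have cE : c * Eexp sg = Eexp t * (1 + lam * (sg - t)) by rewrite /c mulfVK //; lra.
pose g z := if z <= t then Eexp z else c * Eexp z.
have sg' : super g.
  split; first by rewrite /g (Xge Xt); exact: E_ge1.
  move=> y' x' Xy' Xx' yx'.
  rewrite {2}/g; case: ifP => hx'.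
    rewrite /g (le_trans yx' hx'); exact: E_super.2.
  move/negbT: hx'; rewrite -ltNge => hx'.
  have sx := hsg x' Xx' hx'.
  rewrite /g; case: ifP => hy'.
    have s1 := E_super.2 y' t Xy' Xt hy'.
    have s2 := E_super.2 sg x' Xs Xx' sx.
    have a1 := lamD hy'. have a2 := lamD sx. have a3 := lamD (ltW ts).
    have Ey' := E_ge1 Xy'.
    have k : 1 + lam * (x' - y') <= (1 + lam * (t - y')) * (1 + lam * (sg - t)) * (1 + lam * (x' - sg)).
      have -> : lam * (x' - y') = lam * (t - y') + lam * (sg - t) + lam * (x' - sg) by ring.
      exact: prod3.
    have : Eexp y' * (1 + lam * (x' - y')) <= Eexp t * (1 + lam * (sg - t)) * (1 + lam * (x' - sg)).
      apply: le_trans (_ : Eexp y' * ((1 + lam * (t - y')) * (1 + lam * (sg - t)) * (1 + lam * (x' - sg))) <= _).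
        by apply: ler_wpM2l => //; lra.
      have : 0 <= (1 + lam * (sg - t)) * (1 + lam * (x' - sg)) by apply: mulr_ge0; lra.
      nra.
    rewrite -cE => h; apply: le_trans h _.
    have : c * (Eexp sg * (1 + lam * (x' - sg))) <= c * Eexp x' by apply: ler_wpM2l.
    by rewrite mulrA.
  rewrite -mulrA; apply: ler_wpM2l => //; exact: E_super.2.
apply: le_trans (E_le Xs sg') _.
rewrite /g; have -> : (sg <= t) = false by apply/negbTE; rewrite -ltNge.
by rewrite cE.
Qed.

Lemma E_est t e : X t -> 0 < e -> exists d, 0 < d /\ forall s, X s -> `|s - t| < d ->
  `|Eexp t - Eexp s - lam * Eexp t * (t - s)| <= e * `|t - s|.
Proof.
move=> Xt e0.
have Et1 := E_ge1 Xt.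
have K0 : 0 < 2 * Eexp t * lam ^+ 2 by apply: mulr_gt0; [lra | exact: exprn_gt0].
exists (Num.min (1 / (2 * lam)) (e / (2 * Eexp t * lam ^+ 2))); split.
  by rewrite lt_min; apply/andP; split; apply: divr_gt0 => //; rewrite mulr_gt0.
move=> s Xs; rewrite lt_min => /andP [h1 h2].
have hl : lam * `|s - t| < 1 / 2.
  by move: h1; rewrite ltr_pdivlMr ?mulr_gt0 //; lra.
have hK : 2 * Eexp t * lam ^+ 2 * `|s - t| <= e.
  by move: h2; rewrite ltr_pdivlMr // => h; lra.
have n0 := normr_ge0 (s - t).
rewrite (distrC t s).
have [st|ts|->]:= ltgtP s t; last by rewrite !subrr normr0 mulr0 subr0 normr0 mulr0.
- rewrite ltr0_norm ?subr_lt0 // in hl hK n0 *.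
  have up := E_super.2 s t Xs Xt (ltW st).
  have lo := E_up Xs Xt st ltac:(lra).
  have den : 0 < 1 - lam * (t - s) by lra.
  have lo' : Eexp t * (1 - lam * (t - s)) <= Eexp s by rewrite -ler_pdivlMr //.
  have Es1 := E_ge1 Xs.
  have aa := lamD (ltW st).
  rewrite ler_norml; apply/andP; split.
  +
    have : Eexp s * (1 + lam * (t - s)) <= Eexp t by [].
    nra.
  + nra.
- rewrite gtr0_norm ?subr_gt0 // in hl hK n0 *.
  have up := E_super.2 t s Xt Xs (ltW ts).
  have lo := E_up Xt Xs ts ltac:(lra).
  have den : 0 < 1 - lam * (s - t) by lra.
  have lo' : Eexp s * (1 - lam * (s - t)) <= Eexp t by rewrite -ler_pdivlMr //.
  have Es1 := E_ge1 Xs.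
  have aa := lamD (ltW ts).
  rewrite ler_norml; apply/andP; split; nra.
Qed.
Lemma E_deriv Y t : closed X -> Y `<=` X -> Y t ->
  (fjump Y t = t \/ fjump Y t = fjump X t) -> is_dderiv Y Eexp t (lam * Eexp t).
Proof.
move=> cX sYX Yt hj e e0.
have Xt := sYX _ Yt.
have [d [d0 hd]] := E_est Xt e0.
case: (pselect (fjump Y t = t)) => hY.
  exists d; split => // s Ys hs; rewrite hY; exact: hd (sYX _ Ys) hs.
have hYX : fjump Y t = fjump X t by case: hj.
have exY : exists s, Y s /\ t < s.
  by apply: contrapT => nex; apply: hY; exact: fjump_none.
have exX : exists s, X s /\ t < s.
  by case: exY => s [Ys ts]; exists s; split => //; apply: sYX.
have [fY1 fY2 _] := fjump_facts exY.
have [fX1 fX2 _] := fjump_facts exX.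
have tsg : t < fjump X t.
  rewrite -hYX lt_neqAle fY1 andbT; apply/eqP => h; apply: hY; exact/esym.
have Xsg := fjump_in cX exX.
have Ej := E_jump Xt Xsg tsg fX2.
exists (Num.min d (fjump X t - t)); split; first by rewrite lt_min d0 subr_gt0 tsg.
move=> s Ys; rewrite lt_min => /andP [h1 h2].
have st : s <= t.
  rewrite leNgt; apply/negP => ts.
  have := fY2 s Ys ts; rewrite hYX.
  by move: h2; rewrite gtr0_norm ?subr_gt0 //; lra.
have := hd s (sYX _ Ys) h1.
rewrite hYX Ej.
have -> : Eexp t * (1 + lam * (fjump X t - t)) - Eexp s - lam * Eexp t * (fjump X t - s)
  = Eexp t - Eexp s - lam * Eexp t * (t - s) by ring.
move=> h; apply: (le_trans h); apply: ler_wpM2l; first exact: ltW.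
rewrite !ger0_norm ?subr_ge0 //; first lra.
by apply: le_trans st (ltW tsg).
Qed.
End Exp.
Lemma dd_comb Y f g h t c d c' (k1 k2 k3 : R) : is_dderiv Y f t c -> is_dderiv Y g t d ->
  (forall x, h x = k1 * f x + k2 * g x + k3) -> c' = k1 * c + k2 * d -> is_dderiv Y h t c'.
Proof.
move=> Hf Hg Eh ->.
have H := dd_lin k1 k2 k3 Hf Hg.
move=> e e0; have [dl [dl0 hd]] := H e e0.
by exists dl; split => // s Ys hs; rewrite !Eh; apply: hd.
Qed.

Lemma contw_comb Y f g h t (k1 k2 k3 : R) : contw Y f t -> contw Y g t ->
  (forall x, h x = k1 * f x + k2 * g x + k3) -> contw Y h t.
Proof.
move=> Hf Hg Eh.
have H := contw_lin k1 k2 k3 Hf Hg.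
move=> e e0; have [dl [dl0 hd]] := H e e0.
by exists dl; split => // s Ys hs; rewrite !Eh; apply: hd.
Qed.

Lemma kappa_sub X : kappa X `<=` X.
Proof. by move=> x []. Qed.

Lemma kappa_out X x : X x -> ~ kappa X x -> forall s, X s -> s <= x.
Proof.
move=> Xx nk; have : ((forall s, X s -> s <= x) /\ bjump X x < x).
  by apply: contrapT => h; apply: nk; split.
by case.
Qed.

Lemma kappa_out_b X x : X x -> ~ kappa X x -> bjump X x < x.
Proof.
move=> Xx nk; have : ((forall s, X s -> s <= x) /\ bjump X x < x).
  by apply: contrapT => h; apply: nk; split.
by case.
Qed.

Lemma kappa_in X x y : X x -> X y -> x < y -> kappa X x.
Proof. by move=> Xx Xy xy; split => // -[h _]; have := h y Xy; lra. Qed.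

Lemma fjump_eq Y X t : Y `<=` X -> (forall x, X x -> ~ Y x -> forall s, X s -> s <= x) ->
  (exists s, Y s /\ t < s) -> fjump Y t = fjump X t.
Proof.
move=> sYX hout exY.
have exX : exists s, X s /\ t < s by case: exY => s [Ys ts]; exists s; split => //; apply: sYX.
have [fY1 fY2 fY3] := fjump_facts exY.
have [fX1 fX2 fX3] := fjump_facts exX.
apply/eqP; rewrite eq_le; apply/andP; split.
- rewrite leNgt; apply/negP => h.
  have e0 : 0 < fjump Y t - fjump X t by rewrite subr_gt0.
  have [s [Xs [ts hs]]] := fX3 _ e0.
  case: (pselect (Y s)) => Ys.
    have := fY2 s Ys ts; lra.
  case: exY => s0 [Ys0 ts0].
  have := hout s Xs Ys s0 (sYX _ Ys0).
  have := fY2 s0 Ys0 ts0; lra.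
- rewrite leNgt; apply/negP => h.
  have e0 : 0 < fjump X t - fjump Y t by rewrite subr_gt0.
  have [s [Ys [ts hs]]] := fY3 _ e0.
  have := fX2 s (sYX _ Ys) ts; lra.
Qed.

Lemma kappa_closed X : closed X -> closed (kappa X).
Proof.
move=> cX p clp.
have Xp : X p.
  apply: cX => B nB; have [x [kx Bx]] := clp B nB.
  by exists x; split => //; case: kx.
case: (pselect (kappa X p)) => // nk; exfalso.
have bp := kappa_out_b Xp nk.
have mx := kappa_out Xp nk.
have nB : nbhs p (ball p (p - bjump X p)).
  by apply/nbhs_ballP; exists (p - bjump X p) => //=; rewrite subr_gt0.
have [x [kx Bx]] := clp _ nB.
have Xx := kappa_sub kx.
have xp : x < p.
  rewrite lt_neqAle mx // andbT; apply/eqP => xp; apply: nk; by rewrite -xp.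
have := bjump_lt bp Xx xp.
move: Bx; rewrite /ball /= ger0_norm; last by rewrite subr_ge0 ltW.
lra.
Qed.
End H.

Unset Implicit Arguments.

Theorem mainTheorem1 (R : realType) (T : set R) (a b alpha beta : R) :
  time_scale T -> T a -> T b -> a < b ->
  (exists l1 l2 : R, 0 < l1 /\ 0 < l2 /\ l1 != l2 /\
     l1 ^+ 2 + alpha * l1 + beta = 0 /\ l2 ^+ 2 + alpha * l2 + beta = 0) ->
  exists K : R, 0 < K /\
    forall eps : R, 0 < eps ->
    forall y y1 y2 : R -> R,
      C2rd (tsitv T a b) y y1 y2 ->
      (forall t, kappa (kappa (tsitv T a b)) t ->
         `|y2 t + alpha * y1 t + beta * y t| <= eps) ->
      exists u u1 u2 : R -> R,
        C2rd (tsitv T a b) u u1 u2 /\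
        (forall t, kappa (kappa (tsitv T a b)) t ->
           u2 t + alpha * u1 t + beta * u t = 0) /\
        (forall t, tsitv T a b t -> `|y t - u t| <= K * eps).
Proof.
move=> [_ cT] Ta Tb ab [l1 [l2 [l10 [l20 [l12 [e1 e2]]]]]].
have l12' : l1 - l2 != 0 by rewrite subr_eq0.
have hal : alpha = - (l1 + l2).
  have : (l1 - l2) * (l1 + l2 + alpha) = 0.
    have -> : (l1 - l2) * (l1 + l2 + alpha) = (l1 ^+ 2 + alpha * l1 + beta) - (l2 ^+ 2 + alpha * l2 + beta) by ring.
    by rewrite e1 e2 subrr.
  move/eqP; rewrite mulf_eq0 (negbTE l12') /= => /eqP h.
  have -> : alpha = (l1 + l2 + alpha) - (l1 + l2) by ring.
  by rewrite h sub0r.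
have hbe : beta = l1 * l2.
  have -> : beta = (l1 ^+ 2 + alpha * l1 + beta) - (l1 ^+ 2 + alpha * l1) by ring.
  by rewrite e1 hal; ring.
exists (4 / (l1 * l2)); split; first by apply: divr_gt0 => //; apply: mulr_gt0.
move=> eps eps0 y y1 y2 [Cy1 [Cy2 Cy3]] Hy.
set X := tsitv T a b.
have cX : closed X.
  have -> : X = T `&` ([set x | a <= x] `&` [set x | x <= b]).
    apply/seteqP; split => x /=.
      by case=> Tx /andP [h1 h2].
    by case=> Tx [h1 h2]; split => //; apply/andP.
  apply: closedI => //; apply: closedI; [exact: closed_ge | exact: closed_le].
have Xa : X a by split => //; rewrite lexx ltW.
have Xb : X b by split => //; rewrite lexx ltW.
have Xge : forall x, X x -> a <= x by move=> x [_ /andP[]].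
have Xle : forall x, X x -> x <= b by move=> x [_ /andP[]].
set KX := kappa X.
have cKX : closed KX by exact: kappa_closed.
have sKX : KX `<=` X by exact: kappa_sub.
have KXa : KX a by exact: kappa_in Xa Xb ab.
have hout : forall x, X x -> ~ KX x -> forall s, X s -> s <= x.
  by move=> x Xx nk; exact: kappa_out.
have hsKX : has_sup KX.
  by split; [exists a | exists b => x /sKX; exact: Xle].
set m := sup KX.
have mmax : forall s, KX s -> s <= m by move=> s Ks; exact: sup_upper_bound.
have KXm : KX m.
  apply: closed_approx => // e e0.
  have [x Kx hx] := sup_adherent e0 hsKX.
  exists x; split => //; rewrite -/m in hx.
  have := mmax x Kx => xm; rewrite ger0_norm; [lra|]; rewrite subr_ge0 //.
have Xm : X m by exact: sKX.
set E1 := Eexp X a l1.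
set E2 := Eexp X a l2.
have E1d : forall Y t, Y `<=` X -> Y t -> (fjump Y t = t \/ fjump Y t = fjump X t) ->
    is_dderiv Y E1 t (l1 * E1 t).
  by move=> Y t sY Yt hj; exact: E_deriv.
have E2d : forall Y t, Y `<=` X -> Y t -> (fjump Y t = t \/ fjump Y t = fjump X t) ->
    is_dderiv Y E2 t (l2 * E2 t).
  by move=> Y t sY Yt hj; exact: E_deriv.
have E1p : forall x, X x -> 0 < E1 x by move=> x Xx; have := E_ge1 Xa Xge l10 Xx; rewrite /E1; lra.
have E2p : forall x, X x -> 0 < E2 x by move=> x Xx; have := E_ge1 Xa Xge l20 Xx; rewrite /E2; lra.
have jKX : forall t, KX t -> fjump KX t = t \/ fjump KX t = fjump X t.
  move=> t Kt; case: (pselect (exists s, KX s /\ t < s)) => ex.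
    by right; apply: fjump_eq.
  by left; apply: fjump_none.
pose c1 := (y1 m - l2 * y m) / ((l1 - l2) * E1 m).
pose c2 := (y b - c1 * E1 b) / E2 b.
pose u x := c1 * E1 x + c2 * E2 x + 0.
pose u1 x := (c1 * l1) * E1 x + (c2 * l2) * E2 x + 0.
pose u2 x := (c1 * l1 * l1) * E1 x + (c2 * l2 * l2) * E2 x + 0.
have Du : forall t, X t -> is_dderiv X u t (u1 t).
  move=> t Xt; apply: (dd_comb (E1d X t _ Xt _) (E2d X t _ Xt _)) => //.
  - by right.
  - by right.
  - by rewrite /u1; ring.
have Du1 : forall t, KX t -> is_dderiv KX u1 t (u2 t).
  move=> t Kt; apply: (dd_comb (E1d KX t sKX Kt (jKX t Kt)) (E2d KX t sKX Kt (jKX t Kt))) => //.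
  by rewrite /u2; ring.
have Cu : forall t, X t -> contw X u t by move=> t Xt; exact: dd_cont (Du t Xt).
have Cu2 : forall t, X t -> contw X u2 t.
  move=> t Xt; apply: (contw_comb (k1 := c1 * l1 * l1) (k2 := c2 * l2 * l2) (k3 := 0)
     (dd_cont Xt (E1d X t _ Xt (or_intror erefl))) (dd_cont Xt (E2d X t _ Xt (or_intror erefl)))) => //.
have equ : forall t, u2 t + alpha * u1 t + beta * u t = 0.
  move=> t.
  have -> : u2 t + alpha * u1 t + beta * u t =
    c1 * E1 t * (l1 ^+ 2 + alpha * l1 + beta) + c2 * E2 t * (l2 ^+ 2 + alpha * l2 + beta).
    by rewrite /u2 /u1 /u; ring.
  by rewrite e1 e2 !mulr0 addr0.
exists u, u1, u2; split.
  split; first by move=> t Kt; apply: Du; exact: sKX.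
  split; first by move=> t Kt; apply: Du1; case: Kt.
  apply: (rd_cont_of (X := X)) => //.
  by move=> t [Kt _]; exact: sKX.
split; first by move=> t _; exact: equ.
have Kin : forall t, KX t -> t < m -> kappa KX t by move=> t Kt tm; exact: kappa_in Kt KXm tm.
have jeq : forall t, KX t -> t < m -> fjump KX t = fjump X t.
  by move=> t Kt tm; apply: fjump_eq => //; exists m.
pose N := 2 * eps / l1.
have N0 : 0 < N by rewrite /N; apply: divr_gt0 => //; lra.
have um : (y1 m - u1 m) - l2 * (y m - u m) = 0.
  have -> : (y1 m - u1 m) - l2 * (y m - u m) = (y1 m - l2 * y m) - c1 * ((l1 - l2) * E1 m) by rewrite /u1 /u; ring.
  rewrite /c1 mulfVK ?subrr //; apply: mulf_neq0 => //; exact: lt0r_neq0 (E1p m Xm).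
have Hz : forall sg : R, sg = 1 \/ sg = -1 -> forall t, KX t ->
    0 < sg * ((y1 t - u1 t) - l2 * (y t - u t)) + N.
  move=> sg hsg.
  have sg2 : sg * sg = 1 by case: hsg => ->; rewrite ?mulr1 ?mulrNN ?mulr1.
  apply: (CL (m := m) (l := l1) (dl := eps)) => //; first exact: ltW.
  - move=> t Kt tm.
    have KKt := Kin t Kt tm.
    have dy1 := Cy2 t KKt.
    have du1 := Du1 t Kt.
    have dy : is_dderiv KX y t (y1 t) by apply: dd_sub (jeq t Kt tm) (Cy1 t Kt).
    have du : is_dderiv KX u t (u1 t) by apply: dd_sub (jeq t Kt tm) (Du t (sKX _ Kt)).
    have dw1 : is_dderiv KX (fun x => y1 x - u1 x) t (y2 t - u2 t).
      by apply: (dd_comb (k1 := 1) (k2 := -1) (k3 := 0) dy1 du1) => *; ring.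
    have dw : is_dderiv KX (fun x => y x - u x) t (y1 t - u1 t).
      by apply: (dd_comb (k1 := 1) (k2 := -1) (k3 := 0) dy du) => *; ring.
    exists (sg * (y2 t - u2 t) - sg * l2 * (y1 t - u1 t)); split.
      by apply: (dd_comb (k1 := sg) (k2 := - (sg * l2)) (k3 := N) dw1 dw) => *; ring.
    have hf := Hy t KKt.
    have := equ t.
    move: hf; rewrite hal hbe => hf hu.
    have key : sg * (y2 t - u2 t) - sg * l2 * (y1 t - u1 t) =
      l1 * (sg * ((y1 t - u1 t) - l2 * (y t - u t))) +
      sg * ((y2 t + - (l1 + l2) * y1 t + l1 * l2 * y t) - (u2 t + - (l1 + l2) * u1 t + l1 * l2 * u t)) by ring.
    rewrite key hu subr0.
    have : `|sg * (y2 t + - (l1 + l2) * y1 t + l1 * l2 * y t)| <= eps.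
      by rewrite normrM; case: hsg => ->; rewrite ?normr1 ?normrN ?normr1 mul1r.
    rewrite ler_norml => /andP [_ h].
    have lN : l1 * N = 2 * eps by rewrite /N; field; exact: lt0r_neq0.
    nra.
  - move=> KKm.
    have cy1 := dd_cont KXm (Cy2 m KKm).
    have cu1 := dd_cont KXm (Du1 m KXm).
    have cy : contw KX y m by apply: contw_sub sKX (dd_cont Xm (Cy1 m KXm)).
    have cu : contw KX u m by apply: contw_sub sKX (Cu m Xm).
    have cw1 : contw KX (fun x => y1 x - u1 x) m.
      by apply: (contw_comb (k1 := 1) (k2 := -1) (k3 := 0) cy1 cu1) => *; ring.
    have cw : contw KX (fun x => y x - u x) m.
      by apply: (contw_comb (k1 := 1) (k2 := -1) (k3 := 0) cy cu) => *; ring.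
    by apply: (contw_comb (k1 := sg) (k2 := - (sg * l2)) (k3 := N) cw1 cw) => *; ring.
  - have -> : sg * (y1 m - u1 m - l2 * (y m - u m)) = 0 by rewrite um mulr0.
    by rewrite add0r.
have zb : forall t, KX t -> `|(y1 t - u1 t) - l2 * (y t - u t)| < N.
  move=> t Kt; have h1 := Hz 1 (or_introl erefl) t Kt; have h2 := Hz (-1) (or_intror erefl) t Kt.
  rewrite ltr_norml; apply/andP; split; lra.
pose M := 2 * N / l2.
have M0 : 0 < M by rewrite /M; apply: divr_gt0 => //; lra.
have lM : l2 * M = 2 * N by rewrite /M; field; exact: lt0r_neq0.
have ub0 : y b - u b = 0.
  rewrite /u /c2 addr0 mulrC mulfVK; first by ring.
  exact: lt0r_neq0 (E2p b Xb).
have Hw : forall sg : R, sg = 1 \/ sg = -1 -> forall t, X t -> 0 < sg * (y t - u t) + M.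
  move=> sg hsg.
  apply: (CL (m := b) (l := l2) (dl := N)) => //; first exact: ltW.
  - move=> t Xt tb.
    have Kt : KX t by exact: kappa_in Xt Xb tb.
    have dw : is_dderiv X (fun x => y x - u x) t (y1 t - u1 t).
      by apply: (dd_comb (k1 := 1) (k2 := -1) (k3 := 0) (Cy1 t Kt) (Du t Xt)) => *; ring.
    exists (sg * (y1 t - u1 t)); split.
      by apply: (dd_comb (k1 := sg) (k2 := 0) (k3 := M) dw dw) => *; ring.
    have zt := zb t Kt.
    have : `|sg * ((y1 t - u1 t) - l2 * (y t - u t))| < N.
      by rewrite normrM; case: hsg => ->; rewrite ?normr1 ?normrN ?normr1 mul1r.
    rewrite ltr_norml => /andP [_ h].
    have -> : sg * (y1 t - u1 t) = sg * (y1 t - u1 t - l2 * (y t - u t)) + l2 * (sg * (y t - u t)) by ring.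
    have -> : l2 * (sg * (y t - u t) + M) = l2 * (sg * (y t - u t)) + l2 * M by ring.
    rewrite lM; lra.
  - move=> Kb.
    have cw : contw X (fun x => y x - u x) b.
      by apply: (contw_comb (k1 := 1) (k2 := -1) (k3 := 0) (dd_cont Xb (Cy1 b Kb)) (Cu b Xb)) => *; ring.
    by apply: (contw_comb (k1 := sg) (k2 := 0) (k3 := M) cw cw) => *; ring.
  - by rewrite ub0 mulr0 add0r.
move=> t Xt.
have -> : 4 / (l1 * l2) * eps = M.
  rewrite /M /N; field; apply/andP; split; exact: lt0r_neq0.
have h1 := Hw 1 (or_introl erefl) t Xt; have h2 := Hw (-1) (or_intror erefl) t Xt.
rewrite ler_norml; apply/andP; split; lra.
Qed.
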